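(* Let $d$ be odd and $a,b,c\ge1$ integers with $2a+2b+2c=d+1$. Let $P(x)=\sum_{j=0}^d a_jx^j$ be a real polynomial whose coefficients are all non-zero with signs given by $D(a,b,c)$; explicitly, $a_j>0$ for odd $j\geq 2b+2c+1$, $a_j<0$ for odd $j\leq 2b+2c-1$, $a_j>0$ for even $j\geq 2c$, and $a_j<0$ for even $j\leq 2c-2$. Let $P_o(x)=\sum_{\nu}a_{2\nu+1}x^{2\nu+1}$ and $P_e(x)=\sum_\nu a_{2\nu}x^{2\nu}$ be the odd and even parts of $P$, and suppose $P_o(1)=1$ and $P_e(1)=-1$ (so $P(1)=0$). Then $P^{(m)}(1)>0$ for every $m=1,2,\ldots,d$.
   Context: $D(a,b,c)$ denotes the sign pattern of length $d+1$ (listed from the coefficient of $x^d$ down to the constant term) consisting of $2a$ pluses, followed by $b$ pairs ''$-,+$'', followed by $2c$ minuses. $P^{(m)}$ denotes the $m$-th derivative of $P$. *)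

(* Defs.v *)
From mathcomp Require Import all_boot all_order all_algebra.
Set Implicit Arguments. Unset Strict Implicit. Unset Printing Implicit Defensive.
Import Order.TTheory GRing.Theory Num.Theory.
Local Open Scope ring_scope.

Definition sign_D (R : realFieldType) (a b c : nat) (p : {poly R}) : Prop :=
  forall j : nat, (j <= 2*a + 2*b + 2*c - 1)%N ->
    if odd j then (if (2*b + 2*c + 1 <= j)%N then 0 < p`_j else p`_j < 0)
    else (if (2*c <= j)%N then 0 < p`_j else p`_j < 0).

Definition odd_part_at1 (R : realFieldType) (p : {poly R}) : R :=
  \sum_(j < size p | odd j) p`_j.
Definition even_part_at1 (R : realFieldType) (p : {poly R}) : R :=
  \sum_(j < size p | ~~ odd j) p`_j.

(* Main.v *)
Require Import Defs.
From mathcomp Require Import all_boot all_order all_algebra.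
From mathcomp Require Import zify lra.
Import Order.TTheory GRing.Theory Num.Theory.
Local Open Scope ring_scope.

Lemma derivn_at1 (R : realFieldType) (p : {poly R}) m :
  (p^`(m)).[1] = \sum_(j < size p) p`_j *+ (j ^_ m).
Proof.
rewrite -{1}[p]coefK poly_def linear_sum horner_sum; apply: eq_bigr => i _.
by rewrite linearZ /= derivnXn hornerZ hornerMn hornerXn expr1n mulr_natr.
Qed.

Theorem lemma7 (R : realFieldType) (d a b c : nat) (p : {poly R}) :
  odd d -> (1 <= a)%N -> (1 <= b)%N -> (1 <= c)%N ->
  (2*a + 2*b + 2*c = d + 1)%N ->
  size p = d.+1 ->
  sign_D a b c p ->
  odd_part_at1 p = 1 -> even_part_at1 p = -1 ->
  forall m : nat, (1 <= m <= d)%N -> 0 < (p^`(m)).[1].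
Proof.
move=> od ha hb hc hd hs HD Hodd Heven m /andP[m1 md].
rewrite derivn_at1 hs.
have -> : \sum_(j < d.+1) p`_j *+ j ^_ m
    = (\sum_(j < d.+1) p`_j * ('C(j, m))%:R) * (m`!)%:R.
  rewrite big_distrl; apply: eq_bigr => j _.
  by rewrite -bin_ffact mulrnA /= !mulr_natr.
apply: mulr_gt0; last by rewrite ltr0n fact_gt0.
have HDj : forall j : 'I_d.+1, if odd j then
      (if (2*b + 2*c + 1 <= j)%N then 0 < p`_j else p`_j < 0)
    else (if (2*c <= j)%N then 0 < p`_j else p`_j < 0).
  move=> j; apply: HD; have := ltn_ord j; lia.
case: (leqP m (2*b+2*c+1)) => hmT.
- rewrite (bigID (fun j : 'I_d.+1 => odd j)) /=.
  have Ho : ('C(2*b+2*c+1, m))%:R <= \sum_(j < d.+1 | odd j) p`_j * ('C(j, m))%:R :> R.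
    move: Hodd; rewrite /odd_part_at1 hs => Hodd.
    apply: (@le_trans _ _ (\sum_(j < d.+1 | odd j) p`_j * ('C(2*b+2*c+1, m))%:R)).
      by rewrite -big_distrl /= Hodd mul1r.
    apply: ler_sum => j oj; have := HDj j; rewrite oj.
    case: ifP => hj hp.
    + by rewrite ler_pM2l // ler_nat leq_bin2l.
    + by rewrite ler_nM2l // ler_nat leq_bin2l // ltnW // ltnNge hj.
  have He : - ('C(2*c-2, m))%:R <= \sum_(j < d.+1 | ~~ odd j) p`_j * ('C(j, m))%:R :> R.
    move: Heven; rewrite /even_part_at1 hs => Heven.
    apply: (@le_trans _ _ (\sum_(j < d.+1 | ~~ odd j) p`_j * ('C(2*c-2, m))%:R)).
      by rewrite -big_distrl /= Heven mulN1r.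
    apply: ler_sum => j oj; have := HDj j; rewrite (negbTE oj).
    case: ifP => hj hp.
    + rewrite ler_pM2l // ler_nat leq_bin2l //; lia.
    + rewrite ler_nM2l // ler_nat leq_bin2l //.
      have := odd_double_half j; rewrite (negbTE oj) /= -muln2 add0n => hj2.
      move/negbT: hj; rewrite -ltnNge => hj; lia.
  have Hs : ('C(2*c-2, m) < 'C(2*b+2*c+1, m))%N.
    case: m m1 md hmT {Ho He} => // m' _ md hmT.
    rewrite addn1 binS.
    have h1 : ('C(2*c-2, m'.+1) <= 'C(2*b+2*c, m'.+1))%N by apply: leq_bin2l; lia.
    have h2 : (0 < 'C(2*b+2*c, m'))%N by rewrite bin_gt0; lia.
    lia.
  have : (('C(2*c-2, m))%:R < ('C(2*b+2*c+1, m))%:R :> R) by rewrite ltr_nat.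
  lra.
- rewrite (bigD1 ord_max) //=.
  have h1 : 0 < p`_d * ('C(d, m))%:R.
    apply: mulr_gt0; last by rewrite ltr0n bin_gt0.
    have := HDj ord_max; rewrite /= od; case: ifP => // h; lia.
  have h2 : 0 <= \sum_(i < d.+1 | i != ord_max) p`_i * ('C(i, m))%:R.
    apply: sumr_ge0 => j _.
    case: (ltnP j m) => hj; first by rewrite bin_small // mulr0.
    apply: mulr_ge0 => //; apply: ltW.
    have := HDj j; case: ifP => _; case: ifP => // h _; lia.
  lra.
Qed.
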